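(* Let $(L_\bullet,\psi)$ be an $n$-expansion Lie algebra. Then for each $i\in\mathbb{Z}_{\geq1}$, $L_i$ is spanned by the elements $[\sigma_1,[\sigma_2,[\dots,[\sigma_{i-1},\sigma_i]\dots]]]$ with $\sigma_1,\dots,\sigma_i\in L_1$. Furthermore, $\psi$ restricts to an isomorphism $L_1 \to V_{[n]}$.
   Context: $V_{[n]} = \mathbb{F}_2^n$ with basis $e_1,\dots,e_n$, viewed as a graded Lie algebra concentrated in degree $1$ with zero bracket. A graded Lie algebra over $\mathbb{F}_2$ is a Lie algebra $L_\bullet=\bigoplus_{m\geq1}L_m$ over $\mathbb{F}_2$ with $[L_h,L_k]\subseteq L_{h+k}$. An $n$-expansion Lie algebra is a pair $(L_\bullet,\psi)$ with: (1) $L_\bullet$ a graded Lie algebra over $\mathbb{F}_2$ and $\psi:L_\bullet\to V_{[n]}$ a surjective graded Lie algebra homomorphism; (2) $\ker\psi$ an abelian subalgebra; (3) $[L_\bullet,L_\bullet]=\ker\psi$; (4) for each $i\geq4$ and $\sigma_1,\dots,\sigma_i\in L_1$, the element $[\sigma_1,[\sigma_2,[\dots,[\sigma_{i-1},\sigma_i]\dots]]]$ does not depend on the order of $\sigma_1,\dots,\sigma_{i-2}$ and vanishes whenever $\sigma_s=\sigma_t$ for distinct $s,t\in\{1,\dots,i-2\}$; moreover if $\tau_1,\tau_2\in L_1$ and $\psi(\tau_1)\in\{e_1,\dots,e_n\}$ then $[\tau_1,[\tau_1,\tau_2]]=0$. *)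

(* Defs.v *)
From HB Require Import structures.
From mathcomp Require Import all_boot all_order all_algebra.
Set Implicit Arguments. Unset Strict Implicit. Unset Printing Implicit Defensive.
Import GRing.Theory.
Local Open Scope ring_scope.

(* A grading L = (+)_{m>=1} L_m is a family of submodules
   Lm m (only m >= 1 is used) forming an internal direct sum. *)

Definition is_graded_lie_F2 (L : lmodType 'F_2) (br : L -> L -> L)
    (Lm : nat -> {pred L}) : Prop :=

      (forall (a : 'F_2) x y z, br (a *: x + y) z = a *: br x z + br y z) /\
      (forall (a : 'F_2) x y z, br z (a *: x + y) = a *: br z x + br z y) /\
      (forall x, br x x = 0) /\
      (forall x y z, br x (br y z) + br y (br z x) + br z (br x y) = 0) /\
      (forall m, 0 \in Lm m /\
         forall (a : 'F_2) x y, x \in Lm m -> y \in Lm m -> a *: x + y \in Lm m) /\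
      (forall x, exists N (c : nat -> L),
          (forall m, c m \in Lm m.+1) /\ x = \sum_(m < N) c m) /\
      (forall N (c : nat -> L), (forall m, c m \in Lm m.+1) ->
          \sum_(m < N) c m = 0 -> forall m, (m < N)%N -> c m = 0) /\
      (forall h k x y, (0 < h)%N -> (0 < k)%N -> x \in Lm h -> y \in Lm k ->
          br x y \in Lm (h + k)%N).

Fixpoint rbr (L : Type) (br : L -> L -> L) (zero : L) (s : seq L) : L :=
  match s with
  | [::] => zero
  | [:: x] => x
  | x :: s' => br x (rbr br zero s')
  end.

Definition nested (L : lmodType 'F_2) (br : L -> L -> L) (s : seq L) : L :=
  rbr br 0 s.

Definition ebasis (n : nat) (i : 'I_n) : 'rV['F_2]_n := delta_mx 0 i.

(* n-expansion Lie algebra (L, psi), V_[n] = 'rV['F_2]_n concentrated in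
   degree 1 with zero bracket. *)
Definition is_n_expansion (n : nat) (L : lmodType 'F_2) (br : L -> L -> L)
    (Lm : nat -> {pred L}) (psi : L -> 'rV['F_2]_n) : Prop :=
  is_graded_lie_F2 br Lm /\
      (* (1) psi is a surjective graded Lie algebra homomorphism *)
      (forall (a : 'F_2) x y, psi (a *: x + y) = a *: psi x + psi y) /\
      (forall m x, (1 < m)%N -> x \in Lm m -> psi x = 0) /\
      (forall x y, psi (br x y) = 0) /\
      (forall v, exists x, psi x = v) /\
      (forall x y, psi x = 0 -> psi y = 0 -> br x y = 0) /\
      (* (3) [L, L] = ker psi  ([L,L] = F_2-span of brackets = finite sums) *)
      (forall x, psi x = 0 <->
          exists s : seq (L * L), x = \sum_(p <- s) br p.1 p.2) /\
      (forall (s s' : seq L) (a b : L), (2 <= size s)%N ->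
          all (fun x => x \in Lm 1%N) (s ++ [:: a; b]) ->
          all (fun x => x \in Lm 1%N) s' ->
          perm_eq s s' ->
          nested br (s ++ [:: a; b]) = nested br (s' ++ [:: a; b])) /\
      (forall (s : seq L) (a b : L), (2 <= size s)%N ->
          all (fun x => x \in Lm 1%N) (s ++ [:: a; b]) ->
          ~~ uniq s -> nested br (s ++ [:: a; b]) = 0) /\
      (forall t1 t2, t1 \in Lm 1%N -> t2 \in Lm 1%N ->
          (exists i, psi t1 = ebasis i) -> br t1 (br t1 t2) = 0).

(* Main.v *)
Require Import Defs.
From mathcomp Require Import all_boot all_order all_algebra.
Import GRing.Theory.
Local Open Scope ring_scope.
Set Implicit Arguments. Unset Strict Implicit.

Lemma two0 : (1 + 1 : 'F_2) = 0. Proof. exact: val_inj. Qed.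

Lemma addxx (V : lmodType 'F_2) (x : V) : x + x = 0.
Proof. by rewrite -[x]scale1r -scalerDl two0 scale0r. Qed.

Lemma oppx (V : lmodType 'F_2) (x : V) : - x = x.
Proof. by apply/eqP; rewrite eq_sym -addr_eq0 addxx. Qed.

Lemma xxx0 (V : lmodType 'F_2) (b : V) : b = b + b -> b = 0.
Proof. by rewrite -{1}[b]addr0 => /addrI. Qed.

Definition bil_l (L : lmodType 'F_2) (br : L -> L -> L) :=
  forall (a : 'F_2) x y z, br (a *: x + y) z = a *: br x z + br y z.
Definition bil_r (L : lmodType 'F_2) (br : L -> L -> L) :=
  forall (a : 'F_2) x y z, br z (a *: x + y) = a *: br z x + br z y.

Lemma brDl L br (H : @bil_l L br) x y z : br (x + y) z = br x z + br y z.
Proof. by have := H 1 x y z; rewrite !scale1r. Qed.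
Lemma brDr L br (H : @bil_r L br) x y z : br z (x + y) = br z x + br z y.
Proof. by have := H 1 x y z; rewrite !scale1r. Qed.
Lemma br0l L br (H : @bil_l L br) z : br 0 z = 0.
Proof. by apply: xxx0; rewrite -brDl // addr0. Qed.
Lemma br0r L br (H : @bil_r L br) z : br z 0 = 0.
Proof. by apply: xxx0; rewrite -brDr // addr0. Qed.

Definition Pn (L : lmodType 'F_2) (br : L -> L -> L) (Lm : nat -> {pred L})
  (i : nat) (x : L) :=
  exists S : seq (seq L),
    all (fun s => (size s == i) && all (fun y => y \in Lm 1%N) s) S /\
    x = \sum_(s <- S) nested br s.

Lemma P0 L br Lm i : @Pn L br Lm i 0.
Proof. by exists [::]; rewrite big_nil. Qed.

Lemma PD L br Lm i x y : @Pn L br Lm i x -> Pn br Lm i y -> Pn br Lm i (x + y).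
Proof.
case=> [S1 [H1 ->]] [S2 [H2 ->]]; exists (S1 ++ S2).
by rewrite all_cat H1 H2 big_cat.
Qed.

Lemma brC1 L br Lm (Hr : @bil_r L br) a k Y :
  a \in Lm 1%N -> (0 < k)%N -> Pn br Lm k Y -> Pn br Lm k.+1 (br a Y).
Proof.
move=> Ha Hk [S [HS ->]]; exists (map (cons a) S); split.
  rewrite all_map; apply/allP => t Ht /=.
  by move/allP: HS => /(_ t Ht) /andP [/eqP -> ->]; rewrite eqxx Ha.
rewrite big_map (big_morph (br a) (fun x y => brDr Hr x y a) (br0r Hr a)).
rewrite !big_seq; apply: eq_bigr => t Ht.
move/allP: HS => /(_ t Ht) /andP [/eqP st _].
by case: t Ht st => [|b t] //= _ st; move: Hk; rewrite -st.
Qed.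

Lemma brB L br Lm (Hl : @bil_l L br) (Hr : bil_r br) (Halt : forall x, br x x = 0)
  (Hjac : forall x y z, br x (br y z) + br y (br z x) + br z (br x y) = 0) :
  forall h s, size s = h.+1 -> all (fun y => y \in Lm 1%N) s ->
  forall k Y, (0 < k)%N -> Pn br Lm k Y -> Pn br Lm (h.+1 + k) (br (nested br s) Y).
Proof.
have anti : forall x y, br x y = br y x.
  move=> x y; have := Halt (x + y).
  rewrite (brDl Hl) (brDr Hr x y x) (brDr Hr x y y) (Halt x) (Halt y) add0r addr0 => /eqP.
  by rewrite addr_eq0 oppx => /eqP.
elim=> [|h IH] s.
  case: s => [|a [|]] //= _; rewrite andbT => Ha k Y Hk HY.
  by rewrite add1n; apply: brC1.
case: s => [|a [|b s]] //= [Hs] /andP [Ha Hs'] k Y Hk HY.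
set N := rbr br 0 (b :: s).
have -> : br (br a N) Y = br a (br N Y) + br N (br a Y).
  have := Hjac a N Y; rewrite (anti Y a) (anti Y (br a N)).
  by move/eqP; rewrite addr_eq0 oppx => /eqP ->.
apply: PD.
  rewrite addSn; apply: brC1 => //.
  by apply: (IH (b :: s)); rewrite /= ?Hs.
have -> : (h.+2 + k = h.+1 + k.+1)%N by rewrite addSn addnS.
by apply: (IH (b :: s)); rewrite /= ?Hs //; apply: brC1.
Qed.

Lemma Psum L br Lm (Hl : @bil_l L br) (Hr : bil_r br) (Halt : forall x, br x x = 0)
  (Hjac : forall x y z, br x (br y z) + br y (br z x) + br z (br x y) = 0) h k a b :
  (0 < h)%N -> (0 < k)%N -> Pn br Lm h a -> Pn br Lm k b -> Pn br Lm (h + k) (br a b).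
Proof.
move=> Hh Hk [S [HS ->]] Hb.
rewrite (big_morph (br^~ b) (fun x y => brDl Hl x y b) (br0l Hl b)).
rewrite big_seq; apply: big_ind; [exact: P0 | exact: PD |] => s Hs.
move/allP: HS => /(_ s Hs) /andP [/eqP st As].
case: h Hh st => [|h] // _ st.
exact: (brB Hl Hr Halt Hjac st As).
Qed.

Definition Dec (L : lmodType 'F_2) (G : nat -> L -> Prop) z :=
  exists N (c : nat -> L), (forall m, G m.+1 (c m)) /\ c 0%N = 0 /\
    z = \sum_(m < N) c m.


Lemma widen_sum (L : lmodType 'F_2) (c : nat -> L) N M : (N <= M)%N ->
  \sum_(m < M) (if (m < N)%N then c m else 0) = \sum_(m < N) c m.
Proof. by move=> H; rewrite (@big_ord_widen _ 0 +%R N M c H) [RHS]big_mkcond. Qed.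

Lemma single_sum (L : lmodType 'F_2) (w : L) i M : (i < M)%N ->
  \sum_(m < M) (if (m == i :> nat) then w else 0) = w.
Proof.
move=> H; rewrite -big_mkcond /=.
by rewrite (big_ord1_eq _ (fun _ => w)) H.
Qed.

Lemma Dec0 L G (G0 : forall j, G j 0) : @Dec L G 0.
Proof. by exists 0%N, (fun _ => 0); rewrite big_ord0. Qed.

Lemma DecD L G (G0 : forall j, G j 0)
  (GD : forall j x y, G j x -> G j y -> G j (x + y)) z1 z2 :
  @Dec L G z1 -> Dec G z2 -> Dec G (z1 + z2).
Proof.
case=> [N1 [c1 [H1 [E1 ->]]]] [N2 [c2 [H2 [E2 ->]]]].
exists (N1 + N2)%N, (fun m => (if (m < N1)%N then c1 m else 0) +
                               (if (m < N2)%N then c2 m else 0)).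
split; first by move=> m; apply: GD; case: ifP.
split; first by rewrite E1 E2 !if_same addr0.
by rewrite big_split /= !widen_sum // ?leq_addr ?leq_addl.
Qed.

Lemma Decsingle L G (G0 : forall j, G j 0) m w : G m.+2 w -> @Dec L G w.
Proof.
move=> Hw; exists m.+2, (fun j => if j == m.+1 then w else 0).
split; first by move=> j; case: eqP => [->|].
by split; last rewrite single_sum.
Qed.

Lemma Decbr (L : lmodType 'F_2) br (Lm : nat -> {pred L}) (G : nat -> L -> Prop) (G0 : forall j, G j 0)
  (GD : forall j x y, G j x -> G j y -> G j (x + y))
  (Hl : @bil_l L br) (Hr : bil_r br)
  (Hdec : forall x, exists N (c : nat -> L),
          (forall m, c m \in Lm m.+1) /\ x = \sum_(m < N) c m)
  (HG : forall h k x y, x \in Lm h.+1 -> y \in Lm k.+1 -> G (h.+1 + k.+1)%N (br x y))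
  x y : Dec G (br x y).
Proof.
have [N1 [a [Ha ->]]] := Hdec x.
have [N2 [b [Hb ->]]] := Hdec y.
rewrite (big_morph (br^~ _) (fun x y => brDl Hl x y _) (br0l Hl _)).
apply: big_ind; [exact: Dec0 | exact: DecD|] => h _.
rewrite (big_morph (br _) (fun x y => brDr Hr x y _) (br0r Hr _)).
apply: big_ind; [exact: Dec0 | exact: DecD|] => k _.
apply: (Decsingle G0 (m := (h + k)%N)).
by rewrite -addnS -addSn; apply: HG.
Qed.

Lemma uniqA (L : lmodType 'F_2) (Lm : nat -> {pred L})
  (Hsub : forall m, 0 \in Lm m /\
         forall (a : 'F_2) x y, x \in Lm m -> y \in Lm m -> a *: x + y \in Lm m)
  (Hdir : forall N (c : nat -> L), (forall m, c m \in Lm m.+1) ->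
          \sum_(m < N) c m = 0 -> forall m, (m < N)%N -> c m = 0)
  i x N (c : nat -> L) : x \in Lm i.+1 -> (forall m, c m \in Lm m.+1) ->
  x = \sum_(m < N) c m -> x = if (i < N)%N then c i else 0.
Proof.
move=> Hx Hc Ex.
have Hsubm : forall m x y, x \in Lm m -> y \in Lm m -> x - y \in Lm m.
  by move=> m u v Hu Hv; rewrite addrC -scaleN1r; apply: (Hsub m).2.
pose d m := (if (m < N)%N then c m else 0) - (if m == i then x else 0).
have Hd : forall m, d m \in Lm m.+1.
  move=> m; apply: Hsubm; first by case: ifP => // _; exact: (Hsub _).1.
  by case: eqP => [->|_] //; exact: (Hsub _).1.
have Hs : \sum_(m < N + i.+1) d m = 0.
  rewrite sumrB widen_sum ?leq_addr // single_sum -?Ex ?subrr //.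
  by rewrite addnS ltnS leq_addl.
have := Hdir _ d Hd Hs i; rewrite /d eqxx addnS ltnS leq_addl => /(_ isT).
by move/subr0_eq.
Qed.

Lemma nested_in (L : lmodType 'F_2) br (Lm : nat -> {pred L})
  (Hgr : forall h k x y, (0 < h)%N -> (0 < k)%N -> x \in Lm h -> y \in Lm k ->
          br x y \in Lm (h + k)) :
  forall s : seq L, s != [::] -> all (fun y => y \in Lm 1%N) s -> nested br s \in Lm (size s).
Proof.
elim=> [|a [|b s] IH] //=; first by rewrite andbT.
move=> _ /andP [Ha Hs].
rewrite -[(size s).+2]add1n; apply: (Hgr 1%N (size s).+1 a (nested br (b :: s))) => //.
exact: IH.
Qed.

Theorem proposition3p4 (n : nat) (L : lmodType 'F_2) (br : L -> L -> L)
    (Lm : nat -> {pred L}) (psi : L -> 'rV['F_2]_n) :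
  is_n_expansion br Lm psi ->
  (forall i, (0 < i)%N -> forall x,
      x \in Lm i <->
      exists S : seq (seq L),
        all (fun s => (size s == i) && all (fun y => y \in Lm 1%N) s) S /\
        x = \sum_(s <- S) nested br s) /\
  {in Lm 1%N &, injective psi} /\
  (forall v : 'rV['F_2]_n, exists2 x, x \in Lm 1%N & psi x = v).
Proof.
move=> [[Hl [Hr [Halt [Hjac [Hsub [Hdec [Hdir Hgr]]]]]]]
        [Hpsi [Hpsim [Hpsibr [Hsurj [Hab [Hker _]]]]]]].
have LmD : forall m x y, x \in Lm m -> y \in Lm m -> x + y \in Lm m.
  by move=> m x y Hx Hy; rewrite -[x]scale1r; apply: (Hsub m).2.
have psiD : forall x y, psi (x + y) = psi x + psi y.
  by move=> x y; have := Hpsi 1 x y; rewrite !scale1r.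
have psi0 : psi 0 = 0 by apply: xxx0; rewrite -psiD addr0.
split.
  move=> i Hi x; split; last first.
    case=> S [HS ->]; rewrite big_seq; apply: (big_ind (fun w => w \in Lm i)).
    - exact: (Hsub _).1.
    - exact: LmD.
    move=> s Hs; move/allP: HS => /(_ s Hs) /andP [/eqP st As].
    rewrite -st; apply: nested_in => //.
    by apply/eqP => s0; move: Hi; rewrite -st s0.
  move: i Hi x; elim/ltn_ind => i IH Hi x Hx.
  case: i IH Hi Hx => [|[|j]] // IH _ Hx.
    exists [:: [:: x]]; rewrite /= Hx big_seq1; split => //.
  have /Hker [s Es] := Hpsim _ _ (isT : (1 < j.+2)%N) Hx.
  pose G m w := w \in Lm m /\ ((m <= j.+2)%N -> Pn br Lm m w).
  have G0 : forall m, G m 0 by move=> m; split; [exact: (Hsub _).1 | move=> _; exact: P0].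
  have GD : forall m x y, G m x -> G m y -> G m (x + y).
    move=> m u v [Hu Pu] [Hv Pv]; split; first exact: LmD.
    by move=> Hm; apply: PD; [apply: Pu | apply: Pv].
  have HD : Dec G x.
    rewrite Es; apply: big_ind; [exact: Dec0 | exact: DecD|] => p _.
    apply: Decbr => // h k u v Hu Hv; split; first exact: Hgr.
    move=> Hle; apply: Psum => //.
      by apply: IH => //; apply: leq_trans _ Hle; rewrite addnS ltnS leq_addr.
    by apply: IH => //; apply: leq_trans _ Hle; rewrite addSn ltnS leq_addl.
  case: HD => N [c [Hc [_ Ec]]].
  rewrite (uniqA Hsub Hdir (i := j.+1) Hx (fun m => (Hc m).1) Ec).
  by case: ifP => _; [exact: (Hc _).2 | exact: P0].
have HG1 : forall h k x y, x \in Lm h.+1 -> y \in Lm k.+1 -> (fun m w => w \in Lm m) (h.+1 + k.+1)%N (br x y).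
  by move=> h k u v Hu Hv; apply: Hgr.
split.
  move=> x y Hx Hy Exy.
  have Hz : x - y \in Lm 1%N by rewrite addrC -scaleN1r; apply: (Hsub _).2.
  have Pz : psi (x - y) = 0 by rewrite addrC -scaleN1r Hpsi Exy scaleN1r addNr.
  have [s Es] := (Hker _).1 Pz.
  have HD : Dec (fun m w => w \in Lm m) (x - y).
    have G0' : forall j, (fun m w => w \in Lm m) j 0 by move=> j; exact: (Hsub _).1.
    have GD' : forall j u v, (fun m w => w \in Lm m) j u -> (fun m w => w \in Lm m) j v ->
      (fun m w => w \in Lm m) j (u + v) by move=> j u v; apply: LmD.
    rewrite Es; apply: big_ind; [exact: (Dec0 G0') | exact: (DecD G0' GD') |] => p _.
    exact: (Decbr G0' GD' Hl Hr Hdec HG1).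
  case: HD => N [c [Hc [E0 Ec]]].
  have := uniqA Hsub Hdir (i := 0%N) Hz Hc Ec.
  by rewrite E0 if_same => /subr0_eq.
move=> v; have [x <-] := Hsurj v.
have [N [c [Hc ->]]] := Hdec x.
case: N => [|N].
  by exists 0; [exact: (Hsub _).1 | rewrite big_ord0].
exists (c 0%N) => //.
rewrite (big_morph psi psiD psi0) big_ord_recl big1 ?addr0 // => j _.
by apply: (Hpsim (bump 0 j).+1) => //; rewrite ltnS /bump /= add1n.
Qed.
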